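(* Let $R$ be a finite local Frobenius ring with a fixed primitive additive character $\psi$. Let $\tau$ be any multiplicative character of $R$ and let $\chi$ be a primitive multiplicative character of $R$. Then $$\sum_{a\in R^\times}\chi(a)\,|K_\tau(a)|^2=\tau(-1)\,J(\chi\tau,\chi\overline{\tau})\,G(\chi)^2.$$
   Context: All rings are finite and commutative with identity; $R^\times$ is the unit group; $M$ is the maximal ideal. An additive character $(R,+)\to\mathbb{C}^*$ is primitive if the only ideal on which it is identically $1$ is $(0)$; $R$ is Frobenius if such a character exists. A multiplicative character is a homomorphism $R^\times\to\mathbb{C}^*$; its conductor is $R$ if it is trivial, and otherwise the largest ideal $I\subseteq M$ such that it is identically $1$ on $1+I$; it is primitive if its conductor is $(0)$. $K_\tau(a)=\sum_{u\in R^\times}\tau(u)\psi(u+au^{-1})$; Gauss sum $G(\chi)=\sum_{u\in R^\times}\psi(u)\chi(u)$; Jacobi sum $J(\chi,\eta)=\sum_{u,v\in R^\times,\,u+v=1}\chi(u)\eta(v)$; $\overline{\tau}$ is the complex conjugate (inverse) character. *)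

(* Defs.v *)
From HB Require Import structures.
From mathcomp Require Import all_boot all_order all_algebra all_fingroup all_field.
Set Implicit Arguments. Unset Strict Implicit. Unset Printing Implicit Defensive.
Import Order.TTheory GRing.Theory Num.Theory.
Local Open Scope ring_scope.

Section Defs.
Variable R : finComUnitRingType.

Definition is_ideal (I : {set R}) : Prop :=
  [/\ 0 \in I,
      (forall x y, x \in I -> y \in I -> x - y \in I) &
      (forall r x, x \in I -> r * x \in I)].

(* The set of non-units; in a local ring this is the maximal ideal M. *)
Definition nonunits : {set R} := [set x : R | x \isn't a GRing.unit].

(* R is local: the non-units form an ideal (equivalently, R has a unique
   maximal ideal, namely the set of non-units). *)
Definition local_ring : Prop := is_ideal nonunits.

Definition additive_char (psi : R -> algC) : Prop :=
  psi 0 = 1 /\ forall x y, psi (x + y) = psi x * psi y.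

Definition primitive_additive_char (psi : R -> algC) : Prop :=
  additive_char psi /\
  forall I : {set R}, is_ideal I -> (forall x, x \in I -> psi x = 1) ->
    I = [set 0].

Definition mult_char (chi : {unit R} -> algC) : Prop :=
  chi 1%g = 1 /\ forall u v : {unit R}, chi (u * v)%g = chi u * chi v.

Definition trivial_on_1plus (chi : {unit R} -> algC) (I : {set R}) : Prop :=
  forall u : {unit R}, val u - 1 \in I -> chi u = 1.

(* The conductor is R
   if chi is trivial, and otherwise the largest ideal I contained in M with
   chi trivial on 1 + I; so chi is primitive iff chi is nontrivial and every
   such ideal I is (0). *)
Definition primitive_mult_char (chi : {unit R} -> algC) : Prop :=
  mult_char chi /\ (exists u : {unit R}, chi u <> 1) /\
  forall I : {set R}, is_ideal I -> I \subset nonunits ->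
    trivial_on_1plus chi I -> I = [set 0].

Definition Ksum (psi : R -> algC) (tau : {unit R} -> algC) (a : R) : algC :=
  \sum_(u : {unit R}) tau u * psi (val u + a * val (u^-1)%g).

Definition gauss (psi : R -> algC) (chi : {unit R} -> algC) : algC :=
  \sum_(u : {unit R}) psi (val u) * chi u.

Definition jacobi (chi eta : {unit R} -> algC) : algC :=
  \sum_(u : {unit R}) \sum_(v : {unit R} | val u + val v == 1) chi u * eta v.

Definition mchar_mul (chi eta : {unit R} -> algC) : {unit R} -> algC :=
  fun u => chi u * eta u.

Definition mchar_conj (chi : {unit R} -> algC) : {unit R} -> algC :=
  fun u => (chi u)^*.

Definition unitN1 : {unit R} := FinRing.unit R (@unitrN1 R).

End Defs.

(* Main.v *)
Require Import Defs.
From HB Require Import structures.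
From mathcomp Require Import all_boot all_order all_algebra all_fingroup all_field.
From mathcomp Require Import ring.
Import Order.TTheory GRing.Theory Num.Theory.
Local Open Scope ring_scope.
Import FinRing.Theory.

Lemma unitC (R : finComUnitRingType) (u v : {unit R}) : (u * v = v * u)%g.
Proof. by apply: val_inj; rewrite !val_unitM mulrC. Qed.

Lemma norm1_conj (z : algC) (n : nat) : (0 < n)%N -> z ^+ n = 1 -> z * z^* = 1.
Proof.
move=> n0 zn; rewrite -normCK.
have : `|z| ^+ n = 1 by rewrite -normrX zn normr1.
by move/eqP; rewrite pexpr_eq1 // => /eqP ->; rewrite expr1n.
Qed.

Lemma mchar_X (R : finComUnitRingType) (f : {unit R} -> algC) (u : {unit R}) n :
  mult_char f -> f (u ^+ n)%g = f u ^+ n.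
Proof.
case=> f1 fM; elim: n => [|n IH]; first by rewrite expg0 expr0.
by rewrite expgS fM IH exprS.
Qed.

Lemma mchar_V (R : finComUnitRingType) (f : {unit R} -> algC) (u : {unit R}) :
  mult_char f -> f u * f (u^-1)%g = 1.
Proof. by case=> f1 fM; rewrite -fM mulgV. Qed.

Lemma mchar_conj' (R : finComUnitRingType) (f : {unit R} -> algC) (u : {unit R}) :
  mult_char f -> (f u)^* = f (u^-1)%g.
Proof.
move=> fc.
have h1 : f u * (f u)^* = 1.
  apply: (@norm1_conj _ #[u]%g); first exact: order_gt0.
  by rewrite -mchar_X // expg_order; case: fc.
have nz : f u != 0 by apply/eqP => h; move: h1; rewrite h mul0r => /eqP; rewrite eq_sym oner_eq0.
by apply: (mulfI nz); rewrite h1 mchar_V.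
Qed.

Lemma achar_X (R : finComUnitRingType) (psi : R -> algC) (x : R) n :
  additive_char psi -> psi (x *+ n) = psi x ^+ n.
Proof.
case=> p0 pD; elim: n => [|n IH]; first by rewrite mulr0n expr0.
by rewrite mulrS pD IH exprS.
Qed.

Lemma achar_conj (R : finComUnitRingType) (psi : R -> algC) (x : R) :
  additive_char psi -> (psi x)^* = psi (- x).
Proof.
move=> pc.
have h1 : psi x * (psi x)^* = 1.
  apply: (@norm1_conj _ #[x]%g); first exact: order_gt0.
  rewrite -achar_X // -zmodXgE expg_order. by case: pc.
have h2 : psi x * psi (- x) = 1 by case: pc => p0 pD; rewrite -pD subrr.
have nz : psi x != 0 by apply/eqP => h; move: h1; rewrite h mul0r => /eqP; rewrite eq_sym oner_eq0.
by apply: (mulfI nz); rewrite h1 h2.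
Qed.


Lemma find_u (R : finComUnitRingType) (chi : {unit R} -> algC) (x : R) :
  primitive_mult_char chi -> x \isn't a GRing.unit ->
  exists u : {unit R}, chi u <> 1 /\ val u * x = x.
Proof.
case=> _ [[u0 hu0] prim] xnu.
have [->|x0] := eqVneq x 0; first by exists u0; rewrite mulr0.
pose I := [set r : R | r * x == 0].
have Iid : is_ideal I.
  split; first by rewrite inE mul0r.
    by move=> a b; rewrite !inE mulrBl => /eqP -> /eqP ->; rewrite subrr.
  by move=> a b; rewrite !inE -mulrA => /eqP ->; rewrite mulr0.
have Isub : I \subset nonunits R.
  apply/subsetP => r; rewrite !inE => /eqP rx; apply/negP => ru.
  by move: x0; rewrite -(mulKr ru x) rx mulr0 eqxx.
case: (boolP [exists u : {unit R}, (val u - 1 \in I) && (chi u != 1)]).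
  case/existsP => u /andP [uI cu]; exists u; split; first exact/eqP.
  by move: uI; rewrite inE mulrBl mul1r subr_eq0 => /eqP.
rewrite negb_exists => /forallP hall.
have triv : trivial_on_1plus chi I.
  move=> u uI; move: (hall u); rewrite uI /= negbK => /eqP //.
have I0 := prim I Iid Isub triv.
have inj : injective (fun r : R => r * x).
  move=> a b /= ab; apply/eqP; rewrite -subr_eq0.
  have : a - b \in I by rewrite inE mulrBl ab subrr.
  by rewrite I0 inE.
have [g _ gK] := injF_bij inj.
have : x \is a GRing.unit by apply/unitrPr; exists (g 1); rewrite mulrC (gK 1).
by rewrite (negbTE xnu).
Qed.

Lemma S_eval (R : finComUnitRingType) (psi : R -> algC) (chi : {unit R} -> algC) (x : R) :
  additive_char psi -> primitive_mult_char chi ->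
  \sum_(a : {unit R}) chi a * psi (val a * x) =
  gauss psi chi * \sum_(w : {unit R} | val w == x) chi (w^-1)%g.
Proof.
move=> pc chp; have [[c1 cM] _] := chp.
case: (boolP (x \is a GRing.unit)) => xu.
  pose w0 := FinRing.unit R xu.
  rewrite [X in _ = _ * X](big_pred1 w0); last first.
    by move=> w; rewrite /= -(inj_eq val_inj).
  rewrite (reindex_inj (mulIg (w0^-1)%g)) /= /gauss mulr_suml.
  apply: eq_bigr => b _; rewrite cM divrK //.
  by rewrite mulrC mulrA.
rewrite [X in _ = _ * X]big_pred0; last first.
  move=> w; apply/negbTE/eqP => wx; move: xu; by rewrite -wx (valP w).
rewrite mulr0.
have [u [cu ux]] := @find_u _ _ _ chp xu.
set S := \sum_a _.
have : S = chi u * S.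
  rewrite {1}/S (reindex_inj (mulIg u)) /= /S mulr_sumr.
  apply: eq_bigr => a _; rewrite cM -[FinRing.uval a * _ * x]mulrA (ux : FinRing.uval u * x = x).
  by rewrite [chi a * _]mulrC -mulrA.
move/eqP; rewrite -subr_eq0 -{1}[S]mul1r -mulrBl mulf_eq0 subr_eq0 => /orP [/eqP h|/eqP //].
by case: cu.
Qed.


Lemma Kexp (R : finComUnitRingType) (psi : R -> algC) (tau : {unit R} -> algC) (a : R) :
  additive_char psi ->
  `|Ksum psi tau a| ^+ 2 = \sum_(u : {unit R}) \sum_(v : {unit R})
     tau u * (tau v)^* * psi (val u - val v) * psi (a * (val (u^-1)%g - val (v^-1)%g)).
Proof.
move=> pc; have [p0 pD] := pc.
rewrite normCK /Ksum rmorph_sum mulr_suml; apply: eq_bigr => u _.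
rewrite mulr_sumr; apply: eq_bigr => v _; rewrite rmorphM /= achar_conj //.
rewrite mulrACA -pD -[RHS]mulrA -pD; congr (_ * psi _); ring.
Qed.

Lemma triple_big (T : finType) (F : T -> T -> T -> algC) :
  \sum_(i : T) \sum_(j : T) \sum_(k : T) F i j k =
  \sum_(p : (T * T) * T) F p.1.1 p.1.2 p.2.
Proof. by rewrite pair_big /= pair_big. Qed.

Lemma n1V (R : finComUnitRingType) : ((unitN1 R)^-1 = unitN1 R)%g.
Proof. by apply: val_inj; rewrite val_unitV /= invrN1. Qed.

Lemma uV1 (R : finComUnitRingType) (u : {unit R}) : val u * val (u^-1)%g = 1.
Proof. by rewrite val_unitV mulrV // (valP u). Qed.

Lemma reidx (R : finComUnitRingType) (psi : R -> algC) (tau chi : {unit R} -> algC) :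
  additive_char psi -> mult_char tau -> mult_char chi ->
  \sum_(p : ({unit R} * {unit R}) * {unit R})
    (if val p.2 == val (p.1.1^-1)%g - val (p.1.2^-1)%g then
       tau p.1.1 * (tau p.1.2)^* * psi (val p.1.1 - val p.1.2) * chi (p.2^-1)%g else 0)
  = \sum_(p : ({unit R} * {unit R}) * {unit R})
    (if val p.1.1 + val p.1.2 == 1 then
       tau (unitN1 R) * (chi p.1.1 * tau p.1.1 * (chi p.1.2 * (tau p.1.2)^*)) *
       (psi (val p.2) * chi p.2) else 0).
Proof.
move=> pc tc cc; have [p0 pD] := pc; have [t1 tM] := tc; have [c1 cM] := cc.
pose phi (p : ({unit R} * {unit R}) * {unit R}) :=
  ((p.2 * p.1.1, unitN1 R * p.2 * p.1.2), (p.2 * p.1.1 * p.1.2)^-1)%g.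
have phi_inj : injective phi.
  move=> [[x y] t] [[x' y'] t'] E.
  have e1 := congr1 (fun p => p.1.1) E; have e2 := congr1 (fun p => p.1.2) E.
  have e3 := congr1 (fun p => p.2) E; simpl in e1, e2, e3; move/invg_inj: e3 => e3.
  have e2' : (t * y = t' * y')%g by move: e2; rewrite -!mulgA => /mulgI.
  have ey : y = y' by move: e3; rewrite e1 => /mulgI.
  have et : t = t' by move: e2'; rewrite ey => /mulIg.
  by move: e1; rewrite et => /mulgI ex; rewrite ex ey.
rewrite (reindex_inj phi_inj); apply: eq_bigr => [[[x y] t]] _ /=.
set a := FinRing.uval t; set b := FinRing.uval x; set c := FinRing.uval y.
have ua : a \is a GRing.unit := valP t.
have ub : b \is a GRing.unit := valP x.
have uc : c \is a GRing.unit := valP y.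
have ha : a * a^-1 = 1 by rewrite mulrV.
have hb : b * b^-1 = 1 by rewrite mulrV.
have hc : c * c^-1 = 1 by rewrite mulrV.
have uabc : a * b * c \is a GRing.unit by rewrite !unitrM ua ub uc.
have cond : ((a * b * c)^-1 == (a * b)^-1 - (-1 * a * c)^-1) = (b + c == 1).
  rewrite -(inj_eq (mulrI uabc)) !invrM ?unitrM ?unitrN1 ?ua ?ub ?uc // invrN1.
  have -> : a * b * c * (c^-1 * (b^-1 * a^-1)) = (a * a^-1) * (b * b^-1) * (c * c^-1) by ring.
  have -> : a * b * c * (b^-1 * a^-1 - c^-1 * (a^-1 * -1)) =
     c * (a * a^-1) * (b * b^-1) + b * (a * a^-1) * (c * c^-1) by ring.
  by rewrite ha hb hc !mulr1 eq_sym addrC.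
rewrite cond; case: eqP => // hbc.
have -> : a * b - -1 * a * c = a * (b + c) by ring.
rewrite hbc mulr1 invgK !tM !cM !rmorphM /= !(fun u => @mchar_conj' _ tau u tc) n1V.
rewrite -[RHS]mulr1 -(@mchar_V _ tau t tc); ring.
Qed.

Theorem mainTheorem8 (R : finComUnitRingType) (psi : R -> algC)
    (tau chi : {unit R} -> algC) :
  local_ring R ->
  primitive_additive_char psi ->
  mult_char tau ->
  primitive_mult_char chi ->
  \sum_(a : {unit R}) chi a * `|Ksum psi tau (val a)| ^+ 2 =
    tau (unitN1 R) * jacobi (mchar_mul chi tau) (mchar_mul chi (mchar_conj tau))
    * gauss psi chi ^+ 2.
Proof.
move=> _ [pc _] tc chp; have [cc _] := chp.
set G := gauss psi chi.
under eq_bigr => a _ do rewrite Kexp //.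
transitivity (\sum_(a : {unit R}) \sum_(u : {unit R}) \sum_(v : {unit R})
   chi a * (tau u * (tau v)^* * psi (val u - val v) *
            psi (val a * (val (u^-1)%g - val (v^-1)%g)))).
  apply: eq_bigr => a _; rewrite mulr_sumr; apply: eq_bigr => u _.
  by rewrite mulr_sumr.
rewrite exchange_big.
transitivity (G * \sum_(u : {unit R}) \sum_(v : {unit R}) \sum_(w : {unit R})
  (if val w == val (u^-1)%g - val (v^-1)%g then
     tau u * (tau v)^* * psi (val u - val v) * chi (w^-1)%g else 0)).
  rewrite mulr_sumr; apply: eq_bigr => u _; rewrite exchange_big mulr_sumr.
  apply: eq_bigr => v _.
  under eq_bigr => a _ do rewrite mulrCA.
  rewrite -mulr_sumr S_eval // big_mkcond mulrCA mulr_sumr; congr (G * _).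
  apply: eq_bigr => w _; case: ifP => _ //; by rewrite mulr0.
rewrite (triple_big _ (fun u v w : {unit R} => if val w == val (u^-1)%g - val (v^-1)%g then
     tau u * (tau v)^* * psi (val u - val v) * chi (w^-1)%g else 0)).
rewrite reidx // -(triple_big _ (fun x y t : {unit R} => if val x + val y == 1 then
       tau (unitN1 R) * (chi x * tau x * (chi y * (tau y)^*)) *
       (psi (val t) * chi t) else 0)).
transitivity (G * (tau (unitN1 R) * jacobi (mchar_mul chi tau) (mchar_mul chi (mchar_conj tau)) * G)); last by rewrite expr2; ring.
congr (G * _).
rewrite /jacobi -mulrA [X in tau (unitN1 R) * X]mulr_suml mulr_sumr; apply: eq_bigr => x _.
rewrite [X in tau (unitN1 R) * X]mulr_suml mulr_sumr [RHS]big_mkcond; apply: eq_bigr => y _ /=.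
case: ifP => _.
  rewrite /G /gauss !mulr_sumr; apply: eq_bigr => t _; by rewrite /mchar_mul /mchar_conj !mulrA.
by rewrite big1.
Qed.
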